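(* Let $d\ge2$ and let $b,c\ge0$ be real with $a=\frac1d\big(1-(b+c)\frac{d(d-1)}2\big)\ge0$, and let $$\rho_{bc}=a\sum_{i=0}^{d-1}|ii\rangle\langle ii|+b\sum_{i<j}|\psi^-_{ij}\rangle\langle\psi^-_{ij}|+c\sum_{i<j}|\psi^+_{ij}\rangle\langle\psi^+_{ij}|.$$ If $\rho_{bc}^{PT}\ge0$, then $\rho_{bc}$ is separable.
   Context: $|\psi^{\pm}_{ij}\rangle=\frac1{\sqrt2}(|ij\rangle\pm|ji\rangle)$, sums over $0\le i<j\le d-1$. $\rho^{PT}$ is the partial transpose on the second factor, $\langle ij|\rho^{PT}|kl\rangle=\langle il|\rho|kj\rangle$. A bipartite state is separable if it can be written as $\sum_ip_i|\alpha_i\rangle\langle\alpha_i|\otimes|\beta_i\rangle\langle\beta_i|$ with $p_i\ge0$. *)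

(* Defs.v *)
(* operators on C^d (x) C^d as 'M[C]_(d*d) via mxtens (index (i,j) <-> i*d+j). *)
From HB Require Import structures.
From mathcomp Require Import all_boot all_order all_algebra.
From mathcomp Require Import complex mxtens.
From mathcomp Require Import reals.
Set Implicit Arguments. Unset Strict Implicit. Unset Printing Implicit Defensive.
Import Order.TTheory GRing.Theory Num.Theory.
Local Open Scope ring_scope.
Local Open Scope complex_scope.

Section QDefs.
Variable R : realType.
Local Notation C := R[i].

Definition adj {m n} (A : 'M[C]_(m, n)) : 'M[C]_(n, m) := (map_mx Num.conj A)^T.

Definition ketbra {n} (v : 'cV[C]_n) : 'M[C]_n := v *m adj v.

Definition ket {d} (i : 'I_d) : 'cV[C]_d := delta_mx i 0.

Definition ket2 {d} (i j : 'I_d) : 'cV[C]_(d * d) :=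
  \col_k (k == mxtens_index (i, j))%:R.

Definition psi_plus {d} (i j : 'I_d) : 'cV[C]_(d * d) :=
  (sqrtC 2)^-1 *: (ket2 i j + ket2 j i).
Definition psi_minus {d} (i j : 'I_d) : 'cV[C]_(d * d) :=
  (sqrtC 2)^-1 *: (ket2 i j - ket2 j i).

(* partial transpose on the second factor: <ij|rho^PT|kl> = <il|rho|kj> *)
Definition ptrans {d} (rho : 'M[C]_(d * d)) : 'M[C]_(d * d) :=
  \matrix_(r, s) rho (mxtens_index ((mxtens_unindex r).1, (mxtens_unindex s).2))
                     (mxtens_index ((mxtens_unindex s).1, (mxtens_unindex r).2)).

Definition psdmx {n} (A : 'M[C]_n) : Prop :=
  adj A = A /\ forall v : 'cV[C]_n, 0 <= (adj v *m A *m v) 0 0.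

Definition separable {d} (rho : 'M[C]_(d * d)) : Prop :=
  exists (N : nat) (p : 'I_N -> R) (alpha beta : 'I_N -> 'cV[C]_d),
    (forall k, 0 <= p k) /\
    rho = \sum_(k < N) (p k)%:C *: tensmx (ketbra (alpha k)) (ketbra (beta k)).

Definition coef_a (d : nat) (b c : R) : R :=
  (1 - (b + c) * ((d * (d - 1))%:R / 2)) / d%:R.

Definition rho_bc (d : nat) (b c : R) : 'M[C]_(d * d) :=
  (coef_a d b c)%:C *: \sum_(i < d) ketbra (ket2 i i)
  + b%:C *: \sum_(i < d) \sum_(j < d | (i < j)%N) ketbra (psi_minus i j)
  + c%:C *: \sum_(i < d) \sum_(j < d | (i < j)%N) ketbra (psi_plus i j).

End QDefs.

(* Main.v *)
Require Import Defs.
From HB Require Import structures.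
From mathcomp Require Import all_boot all_order all_algebra.
From mathcomp Require Import complex mxtens.
From mathcomp Require Import reals.
From mathcomp Require Import ring lra.
Set Implicit Arguments. Unset Strict Implicit. Unset Printing Implicit Defensive.
Import Order.TTheory GRing.Theory Num.Theory.
Local Open Scope complex_scope.
Local Open Scope ring_scope.
Section Q.
Variable R : realType.
Local Notation C := R[i].

Lemma sep0 d : separable (0 : 'M[C]_(d*d)).
Proof.
exists 0%N, (fun _ => 0), (fun _ => 0), (fun _ => 0); split => //.
by rewrite big_ord0.
Qed.

Lemma sepD d (A B : 'M[C]_(d*d)) : separable A -> separable B -> separable (A + B).
Proof.
move=> [N1 [p1 [a1 [b1 [h1 ->]]]]] [N2 [p2 [a2 [b2 [h2 ->]]]]].
exists (N1 + N2)%N, (fun k => match split k with inl i => p1 i | inr j => p2 j end),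
  (fun k => match split k with inl i => a1 i | inr j => a2 j end),
  (fun k => match split k with inl i => b1 i | inr j => b2 j end); split.
  by move=> k; case: (split k).
rewrite big_split_ord; apply: f_equal2; apply: eq_bigr => i _.
  by rewrite (unsplitK (inl _ i)).
by rewrite (unsplitK (inr _ i)).
Qed.

Lemma sepZ d (r : R) (A : 'M[C]_(d*d)) : 0 <= r -> separable A -> separable (r%:C *: A).
Proof.
move=> hr [N [p [a [b [h ->]]]]]; exists N, (fun k => r * p k), a, b; split.
  by move=> k; apply: mulr_ge0.
rewrite scaler_sumr; apply: eq_bigr => k _; by rewrite scalerA rmorphM.
Qed.

Lemma sep_sum d (I : finType) (P : pred I) (F : I -> 'M[C]_(d*d)) :
  (forall i, P i -> separable (F i)) -> separable (\sum_(i | P i) F i).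
Proof. by move=> H; apply: big_ind => //; [exact: sep0 | exact: sepD]. Qed.

Lemma sep_prod d (a b : 'cV[C]_d) : separable (tensmx (ketbra a) (ketbra b)).
Proof.
exists 1%N, (fun _ => 1), (fun _ => a), (fun _ => b); split => //.
by rewrite big_ord1 rmorph1 scale1r.
Qed.

End Q.
Section Q2.
Variable R : realType.
Local Notation C := R[i].
Variable d : nat.
Local Notation idx := (@mxtens_index d d).

Lemma sum_pick (I : finType) (x : I) (F : I -> C) : \sum_i (x == i)%:R * F i = F x.
Proof.
rewrite (bigD1 x) //= eqxx mul1r big1 ?addr0 // => i /negbTE.
by rewrite eq_sym => ->; rewrite mul0r.
Qed.

Lemma sum_pickr (I : finType) (x : I) (F : I -> C) : \sum_i F i * (i == x)%:R = F x.
Proof.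
rewrite (bigD1 x) //= eqxx mulr1 big1 ?addr0 // => i /negbTE ->; by rewrite mulr0.
Qed.

Lemma idx_eq k l m n : (idx (k,l) == idx (m,n)) = (k == m) && (l == n).
Proof. by rewrite (can_eq (@mxtens_indexK d d)) xpair_eqE. Qed.

Lemma tens_ext (A B : 'M[C]_(d*d)) :
  (forall k l m n, A (idx (k,l)) (idx (m,n)) = B (idx (k,l)) (idx (m,n))) -> A = B.
Proof.
move=> H; apply/matrixP=> r s.
rewrite -[r]mxtens_unindexK -[s]mxtens_unindexK.
case: (mxtens_unindex r) => k l; case: (mxtens_unindex s) => m n; exact: H.
Qed.

Lemma ketbraE n (v : 'cV[C]_n) i j : ketbra v i j = v i 0 * (v j 0)^*.
Proof. by rewrite /ketbra /adj !mxE big_ord1 !mxE. Qed.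

Lemma ket2E (i j k l : 'I_d) : ket2 R i j (idx (k,l)) 0 = (k == i)%:R * (l == j)%:R.
Proof. by rewrite /ket2 mxE idx_eq -natrM mulnb. Qed.

Definition ms (k l m n : 'I_d) := ((k == m) && (l == n)) || ((k == n) && (l == m)).

Lemma four_sum (a b : nat) : (a <= 2)%N -> (b <= 2)%N ->
  \sum_(u < 4) ('i ^+ (u * a) * (- 'i) ^+ (u * b)) = 4%:R * (a == b)%:R :> C.
Proof.
have hi : 'i * 'i = -1 :> C by rewrite -expr2 sqrCi.
rewrite !big_ord_recr big_ord0 /=.
by case: a => [|[|[|//]]] _; case: b => [|[|[|//]]] _ /=; ring: hi.
Qed.

Lemma prod_pick (z : C) (f : 'I_d -> nat) k : \prod_p z ^+ (f p * (p == k)) = z ^+ f k.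
Proof.
rewrite (bigD1 k) //= eqxx muln1 big1 ?mulr1 // => p /negbTE ->.
by rewrite muln0 expr0.
Qed.

Lemma prod_bool (P : pred 'I_d) : \prod_p (P p)%:R = ([forall p, P p])%:R :> C.
Proof.
case: (boolP [forall p, P p]) => [/forallP H|/forallPn [p Hp]].
  by rewrite big1 // => p _; rewrite H.
by rewrite (bigD1 p) //= (negbTE Hp) mul0r.
Qed.

Lemma ms_forall k l m n :
  [forall p, ((p == k) + (p == l) == (p == m) + (p == n))%N] = ms k l m n.
Proof.
apply/forallP/idP; last first.
  by case/orP => /andP [/eqP <- /eqP <-] p //; rewrite addnC.
move=> H; move: (H k) (H l); rewrite !eqxx /ms.
case: (eqVneq k m) => [<-|km] /=.
  move=> _; case: (l == n) => //; case: (l == k) => //.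
case: (eqVneq k n) => [<-|kn] /=.
  case: (l == m) => //; case: (l == k) => //=; case: (k == l) => //; rewrite ?andbF //.
by case: (k == l).
Qed.

End Q2.
Section Q3.
Variable R : realType.
Local Notation C := R[i].
Variable d : nat.
Local Notation idx := (@mxtens_index d d).

Lemma phase_sum (k l m n : 'I_d) :
 \sum_(w : {ffun 'I_d -> 'I_4}) ('i ^+ w k * (- 'i) ^+ w m * ('i ^+ w l * (- 'i) ^+ w n))
   = (4 ^ d)%:R * (ms k l m n)%:R :> C.
Proof.
transitivity (\sum_(w : {ffun 'I_d -> 'I_4}) \prod_p ('i ^+ (w p * ((p == k) + (p == l)))
     * (-'i) ^+ (w p * ((p == m) + (p == n)))) : C).
  apply: eq_bigr => w _; rewrite big_split /=.
  under eq_bigr do rewrite mulnDr exprD.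
  rewrite big_split /= !prod_pick.
  under [X in _ = _ * X]eq_bigr do rewrite mulnDr exprD.
  rewrite big_split /= !prod_pick; ring.
rewrite -(bigA_distr_bigA (fun p (u : 'I_4) => 'i ^+ (u * ((p == k) + (p == l)))
     * (- 'i) ^+ (u * ((p == m) + (p == n))) : C)) /=.
have h4 : forall p : 'I_d, \sum_(u < 4) ('i ^+ (u * ((p == k) + (p == l))) * (- 'i) ^+ (u * ((p == m) + (p == n))) : C)
   = 4%:R * (((p == k) + (p == l))%N == ((p == m) + (p == n))%N)%:R.
  by move=> p; apply: four_sum; [case: (p == k); case: (p == l)|case: (p == m); case: (p == n)].
under eq_bigr do rewrite h4.
rewrite big_split /= prodr_const card_ord natrX prod_bool.
by rewrite (ms_forall k l m n).
Qed.

Definition vv (x : 'I_d -> C) (w : {ffun 'I_d -> 'I_4}) : 'cV[C]_d :=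
  \col_k (x k * 'i ^+ (w k)).

Definition Phi (x y : 'I_d -> C) : 'M[C]_(d * d) :=
  \sum_(w : {ffun 'I_d -> 'I_4}) tensmx (ketbra (vv x w)) (ketbra (vv y w)).

Lemma PhiE x y k l m n : (forall t, (x t)^* = x t) -> (forall t, (y t)^* = y t) ->
  Phi x y (idx (k,l)) (idx (m,n)) =
  x k * y l * (x m * y n) * ((4 ^ d)%:R * (ms k l m n)%:R).
Proof.
move=> hx hy; rewrite /Phi summxE.
under eq_bigr do rewrite tensmxE !ketbraE !mxE !rmorphM !rmorphXn /= conjCi hx hy.
rewrite -phase_sum mulr_sumr; apply: eq_bigr => w _; ring.
Qed.

Lemma sep_Phi x y : separable (Phi x y).
Proof. apply: sep_sum => w _; exact: sep_prod. Qed.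

End Q3.
Section Q4.
Variable R : realType.
Local Notation C := R[i].
Variable d : nat.
Local Notation idx := (@mxtens_index d d).

Lemma conj_s2 : ((sqrtC 2)^-1)^* = (sqrtC 2)^-1 :> C.
Proof. by apply: conj_Creal; apply: ger0_real; rewrite invr_ge0 sqrtC_ge0 ler0n. Qed.

Lemma s2s2 : (sqrtC 2)^-1 * (sqrtC 2)^-1 = 2^-1 :> C.
Proof. by rewrite -invfM -expr2 sqrtCK. Qed.

Lemma pair_sum (P : rel 'I_d) (F : 'I_d -> 'I_d -> C) k l :
  \sum_i \sum_(j | P i j) (k == i)%:R * (l == j)%:R * F i j = (P k l)%:R * F k l.
Proof.
rewrite (bigD1 k) //= [X in _ + X]big1 ?addr0; last first.
  move=> i /negbTE ik; apply: big1 => j _; by rewrite eq_sym ik !mul0r.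
under eq_bigr do rewrite eqxx mul1r.
case: (boolP (P k l)) => Hp.
  rewrite (bigD1 l) //= eqxx mul1r big1 ?addr0 ?mul1r //.
  move=> j /andP [_ jl]; have /negbTE -> : l != j by rewrite eq_sym.
  by rewrite mul0r.
rewrite big1 ?mul0r // => j Pj; have /negbTE -> : l != j by apply: contraNneq Hp => ->.
by rewrite mul0r.
Qed.

Lemma pair_sumT (P : rel 'I_d) (F : 'I_d -> 'I_d -> C) k l :
  \sum_i \sum_(j | P i j) (k == j)%:R * (l == i)%:R * F i j = (P l k)%:R * F l k.
Proof.
rewrite -pair_sum; apply: eq_bigr => i _; apply: eq_bigr => j _.
by rewrite [(k == j)%:R * _]mulrC.
Qed.

Lemma pair_sum4 (P : rel 'I_d) (s1 s2 s3 s4 : C) k l m n :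
  \sum_i \sum_(j | P i j)
    ((k == i)%:R * (l == j)%:R * (s1 * ((m == i)%:R * (n == j)%:R) + s2 * ((m == j)%:R * (n == i)%:R))
   + (k == j)%:R * (l == i)%:R * (s3 * ((m == i)%:R * (n == j)%:R) + s4 * ((m == j)%:R * (n == i)%:R)))
  = (P k l)%:R * (s1 * ((m == k)%:R * (n == l)%:R) + s2 * ((m == l)%:R * (n == k)%:R))
  + (P l k)%:R * (s3 * ((m == l)%:R * (n == k)%:R) + s4 * ((m == k)%:R * (n == l)%:R)).
Proof.
under eq_bigr do rewrite big_split /=.
rewrite big_split /=.
rewrite (pair_sum _ (fun i j => s1 * ((m == i)%:R * (n == j)%:R) + s2 * ((m == j)%:R * (n == i)%:R))).
by rewrite (pair_sumT _ (fun i j => s3 * ((m == i)%:R * (n == j)%:R) + s4 * ((m == j)%:R * (n == i)%:R))).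
Qed.

Lemma ltn_sum (k l : 'I_d) : ((k < l)%N%:R + (l < k)%N%:R : C) = (k != l)%:R.
Proof.
rewrite -(inj_eq val_inj) /=; case: ltngtP => _; by rewrite ?addr0 ?add0r.
Qed.

Lemma psimE i j k l : psi_minus R i j (idx (k,l)) 0 =
  (sqrtC 2)^-1 * ((k == i)%:R * (l == j)%:R - (k == j)%:R * (l == i)%:R).
Proof. by rewrite /psi_minus !mxE !idx_eq -!natrM !mulnb. Qed.

Lemma psipE i j k l : psi_plus R i j (idx (k,l)) 0 =
  (sqrtC 2)^-1 * ((k == i)%:R * (l == j)%:R + (k == j)%:R * (l == i)%:R).
Proof. by rewrite /psi_plus !mxE !idx_eq -!natrM !mulnb. Qed.

End Q4.
Section Q5.
Variable R : realType.
Local Notation C := R[i].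
Variable d : nat.
Local Notation idx := (@mxtens_index d d).
Lemma E1 k l m n : (\sum_(i < d) ketbra (ket2 R i i)) (idx (k,l)) (idx (m,n)) =
   (l == k)%:R * ((m == k)%:R * (n == k)%:R) :> C.
Proof.
  rewrite summxE; under eq_bigr do rewrite ketbraE !ket2E rmorphM !rmorph_nat -!mulrA.
  by rewrite sum_pick.
Qed.
Lemma conjS (x : C) : ((sqrtC 2)^-1 * x)^* = (sqrtC 2)^-1 * x^*.
Proof. by rewrite -[X in _ = X * _]conj_s2 -rmorphM. Qed.

Lemma E2 k l m n : (\sum_(i < d) \sum_(j < d | (i < j)%N) ketbra (psi_minus R i j)) (idx (k,l)) (idx (m,n)) =
   2^-1 * ((k != l)%:R * ((m == k)%:R * (n == l)%:R - (m == l)%:R * (n == k)%:R)) :> C.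
Proof.
  rewrite summxE; under eq_bigr do rewrite summxE.
  under eq_bigr do under eq_bigr do rewrite ketbraE !psimE conjS rmorphB !rmorphM !rmorph_nat.
  transitivity ((2 : C)^-1 * \sum_(i < d) \sum_(j < d | (i < j)%N)
    ((k == i)%:R * (l == j)%:R * (1 * ((m == i)%:R * (n == j)%:R) + (-1) * ((m == j)%:R * (n == i)%:R))
   + (k == j)%:R * (l == i)%:R * ((-1) * ((m == i)%:R * (n == j)%:R) + 1 * ((m == j)%:R * (n == i)%:R)))).
    rewrite mulr_sumr; apply: eq_bigr => i _; rewrite mulr_sumr; apply: eq_bigr => j _.
    rewrite -s2s2; ring.
  rewrite (pair_sum4 (fun i j => (i < j)%N)) -ltn_sum; ring.
Qed.
Lemma E3 k l m n : (\sum_(i < d) \sum_(j < d | (i < j)%N) ketbra (psi_plus R i j)) (idx (k,l)) (idx (m,n)) =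
   2^-1 * ((k != l)%:R * ((m == k)%:R * (n == l)%:R + (m == l)%:R * (n == k)%:R)) :> C.
Proof.
  rewrite summxE; under eq_bigr do rewrite summxE.
  under eq_bigr do under eq_bigr do rewrite ketbraE !psipE conjS rmorphD !rmorphM !rmorph_nat.
  transitivity ((2 : C)^-1 * \sum_(i < d) \sum_(j < d | (i < j)%N)
    ((k == i)%:R * (l == j)%:R * (1 * ((m == i)%:R * (n == j)%:R) + 1 * ((m == j)%:R * (n == i)%:R))
   + (k == j)%:R * (l == i)%:R * (1 * ((m == i)%:R * (n == j)%:R) + 1 * ((m == j)%:R * (n == i)%:R)))).
    rewrite mulr_sumr; apply: eq_bigr => i _; rewrite mulr_sumr; apply: eq_bigr => j _.
    rewrite -s2s2; ring.
  rewrite (pair_sum4 (fun i j => (i < j)%N)) -ltn_sum; ring.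
Qed.

Lemma rhoE (b c : R) k l m n :
  rho_bc d b c (idx (k,l)) (idx (m,n)) =
   (coef_a d b c)%:C * ((l == k)%:R * ((m == k)%:R * (n == k)%:R))
   + b%:C * (2^-1 * ((k != l)%:R * ((m == k)%:R * (n == l)%:R - (m == l)%:R * (n == k)%:R)))
   + c%:C * (2^-1 * ((k != l)%:R * ((m == k)%:R * (n == l)%:R + (m == l)%:R * (n == k)%:R))).
Proof. rewrite /rho_bc. rewrite [LHS]mxE [X in X + _ = _]mxE. rewrite [X in X + _ + _ = _]mxE [X in _ + X + _ = _]mxE [X in _ + X = _]mxE.
congr (_ * _ + _ * _ + _ * _). exact: E1. exact: E2. exact: E3. Qed.
End Q5.
Section Q6.
Variable R : realType.
Local Notation C := R[i].
Variable d : nat.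
Local Notation idx := (@mxtens_index d d).

Lemma ptransE (M : 'M[C]_(d * d)) k l m n :
  ptrans M (idx (k,l)) (idx (m,n)) = M (idx (k,n)) (idx (m,l)).
Proof. by rewrite /ptrans mxE !mxtens_indexK. Qed.

Lemma quad_ket (M : 'M[C]_(d * d)) i j p q :
  (adj (ket2 R i j) *m M *m ket2 R p q) 0 0 = M (idx (i,j)) (idx (p,q)).
Proof.
rewrite mxE; under eq_bigr do rewrite mxE [ket2 _ _ _ _ _]mxE.
rewrite sum_pickr; under eq_bigr do rewrite !mxE rmorph_nat eq_sym.
by rewrite sum_pick.
Qed.

Lemma adjB n (u v : 'cV[C]_n) : adj (u - v) = adj u - adj v.
Proof. by apply/matrixP => i j; rewrite !mxE rmorphB. Qed.

Lemma adj_sum n (F : 'I_d -> 'cV[C]_n) : adj (\sum_i F i) = \sum_i adj (F i).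
Proof.
apply/matrixP => i j; rewrite !mxE !summxE rmorph_sum; apply: eq_bigr => t _.
by rewrite !mxE.
Qed.

Lemma quad_sum (M : 'M[C]_(d * d)) (F G : 'I_d -> 'cV[C]_(d * d)) :
  (adj (\sum_i F i) *m M *m (\sum_j G j)) 0 0 = \sum_i \sum_j (adj (F i) *m M *m G j) 0 0.
Proof.
rewrite adj_sum !mulmx_suml summxE; apply: eq_bigr => i _.
by rewrite mulmx_sumr summxE.
Qed.

Lemma mxBE m n (A B : 'M[C]_(m, n)) i j : (A - B) i j = A i j - B i j.
Proof. by rewrite !mxE. Qed.

Lemma ge0_eq (x y : C) : 0 <= x -> x = y -> 0 <= y.
Proof. by move=> h <-. Qed.

Lemma sum_diag (F : 'I_d -> 'I_d -> C) (x y : C) : (forall i, F i i = x) ->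
  (forall i j, i != j -> F i j = y) -> \sum_i \sum_j F i j = d%:R * (x + (d.-1)%:R * y).
Proof.
move=> Hx Hy.
have Hi : forall i, \sum_j F i j = x + (d.-1)%:R * y.
  move=> i; rewrite (bigD1 i) //= Hx; congr (_ + _).
  rewrite (eq_bigr (fun _ => y)); last by move=> j ji; rewrite Hy // eq_sym.
  by rewrite sumr_const cardC1 card_ord mulr_natl.
by rewrite (eq_bigr _ (fun i _ => Hi i)) sumr_const card_ord [RHS]mulr_natl.
Qed.

Lemma pt_ineq (b c : R) : (2 <= d)%N -> psdmx (ptrans (rho_bc d b c)) ->
  (c - b) / 2 <= coef_a d b c /\ 0 <= coef_a d b c + (d.-1)%:R * ((c - b) / 2).
Proof.
move=> d2 [_ Hq].
have h0 : (0 < d)%N by apply: leq_trans d2.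
have h1 : (1 < d)%N by [].
pose i0 := Ordinal h0; pose i1 := Ordinal h1.
have n01 : (i0 == i1) = false by [].
have n10 : (i1 == i0) = false by [].
split.
  have := Hq (ket2 R i0 i0 - ket2 R i1 i1).
  rewrite adjB !mulmxBl !mulmxBr !mxBE !quad_ket !ptransE !rhoE ?eqxx n01 n10 /= => H.
  have H2 : 0 <= (2 * (coef_a d b c - (c - b) / 2))%:C :> C.
    by apply: (ge0_eq H); field.
  move: H2; rewrite ler0c; lra.
have := Hq (\sum_i ket2 R i i).
rewrite quad_sum.
under eq_bigr do under eq_bigr do rewrite quad_ket ptransE rhoE.
rewrite (sum_diag (x := (coef_a d b c)%:C) (y := ((c - b) / 2)%:C)); first last.
- move=> i j ij; have ji : (j == i) = false by rewrite eq_sym (negbTE ij).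
  by rewrite (negbTE ij) ji !eqxx /=; field.
- by move=> i; rewrite !eqxx /=; ring.
move=> H.
have H2 : 0 <= (d%:R * (coef_a d b c + (d.-1)%:R * ((c - b) / 2)))%:C :> C.
  by apply: (ge0_eq H); field.
by move: H2; rewrite ler0c pmulr_rge0 ?ltr0n.
Qed.
End Q6.
Section Q7.
Variable R : realType.
Local Notation C := R[i].
Variable d : nat.
Local Notation idx := (@mxtens_index d d).

Lemma mxDE m n (A B : 'M[C]_(m, n)) i j : (A + B) i j = A i j + B i j.
Proof. by rewrite !mxE. Qed.

Lemma mxZE m n (a : C) (A : 'M[C]_(m, n)) i j : (a *: A) i j = a * A i j.
Proof. by rewrite !mxE. Qed.

Definition dl (i : 'I_d) : 'I_d -> C := fun t => (t == i)%:R.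
Definition one : 'I_d -> C := fun _ => 1.
Definition pl (i j : 'I_d) : 'I_d -> C := fun t => (t == i)%:R + (t == j)%:R.
Definition mn (i j : 'I_d) : 'I_d -> C := fun t => (t == i)%:R - (t == j)%:R.

Local Notation K k l m n := ((4 ^ d)%:R * (ms k l m n)%:R : C).

Lemma Phi_one k l m n : Phi one one (idx (k,l)) (idx (m,n)) = K k l m n.
Proof.
rewrite PhiE; last 2 first; [by move=> t; rewrite /one rmorph1|by move=> t; rewrite /one rmorph1|].
by rewrite /one !mul1r.
Qed.

Lemma Phi_dl i j k l m n : Phi (dl i) (dl j) (idx (k,l)) (idx (m,n)) =
  (k == i)%:R * (l == j)%:R * ((m == i)%:R * (n == j)%:R) * K k l m n.
Proof.
by rewrite PhiE; last 2 first; [by move=> t; rewrite /dl rmorph_nat|by move=> t; rewrite /dl rmorph_nat|].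
Qed.

Lemma Phi_pm i j k l m n : Phi (pl i j) (mn i j) (idx (k,l)) (idx (m,n)) =
  ((k == i)%:R + (k == j)%:R) * ((l == i)%:R - (l == j)%:R) *
  (((m == i)%:R + (m == j)%:R) * ((n == i)%:R - (n == j)%:R)) * K k l m n.
Proof.
by rewrite PhiE; last 2 first;
  [by move=> t; rewrite /pl rmorphD !rmorph_nat|by move=> t; rewrite /mn rmorphB !rmorph_nat|].
Qed.

Lemma SumD k l m n : (\sum_i Phi (dl i) (dl i)) (idx (k,l)) (idx (m,n)) =
  (l == k)%:R * ((m == k)%:R * (n == k)%:R) * K k l m n.
Proof.
rewrite summxE; under eq_bigr do rewrite Phi_dl -!mulrA.
by rewrite sum_pick !mulrA.
Qed.

Lemma SumO k l m n : (\sum_i \sum_(j | i != j) Phi (dl i) (dl j)) (idx (k,l)) (idx (m,n)) =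
  (k != l)%:R * ((m == k)%:R * (n == l)%:R) * K k l m n.
Proof.
rewrite summxE; under eq_bigr do rewrite summxE.
under eq_bigr do under eq_bigr do rewrite Phi_dl -[_ * K k l m n]mulrA.
by rewrite (pair_sum (fun i j => i != j) (fun i j => (m == i)%:R * (n == j)%:R * K k l m n)) mulrA.
Qed.

Lemma SumPM k l m n : (\sum_i \sum_j Phi (pl i j) (mn i j)) (idx (k,l)) (idx (m,n)) =
  (\sum_i \sum_j (((k == i)%:R + (k == j)%:R) * ((l == i)%:R - (l == j)%:R) *
  (((m == i)%:R + (m == j)%:R) * ((n == i)%:R - (n == j)%:R)))) * K k l m n.
Proof.
rewrite summxE mulr_suml; apply: eq_bigr => i _.
by rewrite summxE mulr_suml; apply: eq_bigr => j _; rewrite Phi_pm.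
Qed.

Lemma sum1 (G : C -> C) (k : 'I_d) : \sum_j G (k == j)%:R = d%:R * G 0 + (G 1 - G 0).
Proof.
rewrite (eq_bigr (fun j => G 0 + (k == j)%:R * (G 1 - G 0))); last first.
  by move=> j _; case: (k == j); rewrite /= ?mul1r ?mul0r ?addr0 //; ring.
by rewrite big_split /= sumr_const card_ord sum_pick ?mulr1 [in RHS]mulr_natl.
Qed.

Lemma sum2 (G : C -> C -> C) (k l : 'I_d) : k != l ->
  \sum_j G (k == j)%:R (l == j)%:R = d%:R * G 0 0 + (G 1 0 - G 0 0) + (G 0 1 - G 0 0).
Proof.
move=> kl; have lk : (l == k) = false by rewrite eq_sym (negbTE kl).
rewrite (eq_bigr (fun j => G 0 0 + (k == j)%:R * (G 1 0 - G 0 0) + (l == j)%:R * (G 0 1 - G 0 0))); last first.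
  move=> j _; case: (eqVneq k j) => [<-|kj]; first by rewrite ?eqxx lk /=; ring.
  case: (l == j) => /=; ring.
by rewrite !big_split /= sumr_const card_ord !sum_pick ?mulr1 [in RHS]mulr_natl.
Qed.

End Q7.
Section Q8.
Variable R : realType.
Local Notation C := R[i].
Variable d : nat.
Local Notation idx := (@mxtens_index d d).

Lemma dsum1 (F : C -> C -> C) (k : 'I_d) :
  \sum_i \sum_j F (k == i)%:R (k == j)%:R =
  d%:R * (d%:R * F 0 0 + (F 0 1 - F 0 0)) +
  ((d%:R * F 1 0 + (F 1 1 - F 1 0)) - (d%:R * F 0 0 + (F 0 1 - F 0 0))).
Proof.
under eq_bigr => i _ do rewrite (sum1 (F (k == i)%:R)).
by rewrite (sum1 (fun a => d%:R * F a 0 + (F a 1 - F a 0))).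
Qed.

Lemma dsum2 (F : C -> C -> C -> C -> C) (k l : 'I_d) : k != l ->
  \sum_i \sum_j F (k == i)%:R (l == i)%:R (k == j)%:R (l == j)%:R =
  let H a b := d%:R * F a b 0 0 + (F a b 1 0 - F a b 0 0) + (F a b 0 1 - F a b 0 0) in
  d%:R * H 0 0 + (H 1 0 - H 0 0) + (H 0 1 - H 0 0).
Proof.
move=> kl.
under eq_bigr => i _ do rewrite (sum2 (F (k == i)%:R (l == i)%:R) kl).
by rewrite (sum2 (fun a b => d%:R * F a b 0 0 + (F a b 1 0 - F a b 0 0) + (F a b 0 1 - F a b 0 0)) kl).
Qed.

Lemma SB (k l : 'I_d) :
  \sum_i \sum_j (((k == i)%:R + (k == j)%:R) * ((l == i)%:R - (l == j)%:R) *
    (((k == i)%:R + (k == j)%:R) * ((l == i)%:R - (l == j)%:R))) =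
  2 * (k != l)%:R + 2 * (d%:R - 1) * (k == l)%:R :> C.
Proof.
case: (eqVneq k l) => [<-|kl] /=.
  rewrite (dsum1 (fun a c => (a + c) * (a - c) * ((a + c) * (a - c)))); ring.
rewrite (dsum2 (fun a b c e => (a + c) * (b - e) * ((a + c) * (b - e))) kl) /=; ring.
Qed.

Lemma SC (k l : 'I_d) :
  \sum_i \sum_j (((k == i)%:R + (k == j)%:R) * ((l == i)%:R - (l == j)%:R) *
    (((l == i)%:R + (l == j)%:R) * ((k == i)%:R - (k == j)%:R))) =
  - 2 * (k != l)%:R + 2 * (d%:R - 1) * (k == l)%:R :> C.
Proof.
case: (eqVneq k l) => [<-|kl] /=.
  rewrite (dsum1 (fun a c => (a + c) * (a - c) * ((a + c) * (a - c)))); ring.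
rewrite (dsum2 (fun a b c e => (a + c) * (b - e) * ((b + e) * (a - c))) kl) /=; ring.
Qed.

End Q8.
Ltac simpb := repeat match goal with
  | H : is_true (?x != ?y) |- _ =>
      let H1 := fresh "H" in
      (have H1 : (y == x) = false by rewrite eq_sym (negbTE H));
      rewrite ?(negbTE H) ?H1 /=; clear H H1
  end; rewrite ?eqxx /=.

Ltac fin := rewrite ?SB ?SC; simpb; field; try by rewrite pnatr_eq0 expn_eq0.

Ltac ce x y := let e := fresh "e" in let ne := fresh "ne" in case: (eqVneq x y) => [e|ne]; [rewrite -?e; clear e|].

Ltac cases4 k l m n :=
  ce k l;
  [ ce k m;
    [ ce k n; fin
    | ce k n; [fin| ce m n; fin]]
  | ce k m;
    [ ce k n; [fin| ce l n; fin]
    | ce l m;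
      [ ce k n; [fin| ce l n; fin]
      | ce k n; [fin| ce l n;
          [fin| ce m n; fin]]]]].

Theorem mainTheorem7 (R : realType) (d : nat) (b c : R) :
  (2 <= d)%N -> 0 <= b -> 0 <= c -> 0 <= coef_a d b c ->
  psdmx (ptrans (rho_bc d b c)) -> separable (rho_bc d b c).
Proof.
move=> d2 hb hc ha hpt.
have [h1 h2] := pt_ineq d2 hpt.
have h0 : (0 < d)%N by apply: leq_trans d2.
have ed : (d.-1)%:R = d%:R - 1 :> R by rewrite -[in RHS](prednK h0) -natr1; ring.
rewrite ed in h2.
pose N : R := (4 ^ d)%:R.
have hN : 0 < N by rewrite ltr0n expn_gt0.
have hN' : N != 0 by rewrite gt_eqF.
have eN : (4 ^ d)%:R = N%:C :> R[i] by rewrite /N rmorph_nat.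
set a := coef_a d b c in ha h1 h2 *.
case: (lerP b c) => hbc.
  have -> : rho_bc d b c = ((c - b) / 2 / N)%:C *: Phi (@one R d) (@one R d)
      + ((a - (c - b) / 2) / N)%:C *: (\sum_(i < d) Phi (dl R i) (dl R i))
      + (b / N)%:C *: (\sum_(i < d) \sum_(j < d | i != j) Phi (dl R i) (dl R j)).
    apply: tens_ext => k l m n.
    rewrite rhoE !mxDE !mxZE Phi_one SumD SumO eN /ms.
    cases4 k l m n.
  apply: sepD; [apply: sepD|].
  - apply: sepZ; [by apply: divr_ge0; lra | exact: sep_Phi].
  - apply: sepZ; [by apply: divr_ge0; lra | apply: sep_sum => i _; exact: sep_Phi].
  - apply: sepZ; [by apply: divr_ge0; lra | ].
    apply: sep_sum => i _; apply: sep_sum => j _; exact: sep_Phi.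
have -> : rho_bc d b c = ((b - c) / 2 / 2 / N)%:C *: (\sum_(i < d) \sum_(j < d) Phi (pl R i j) (mn R i j))
      + ((a - (d%:R - 1) * ((b - c) / 2)) / N)%:C *: (\sum_(i < d) Phi (dl R i) (dl R i))
      + (c / N)%:C *: (\sum_(i < d) \sum_(j < d | i != j) Phi (dl R i) (dl R j)).
  apply: tens_ext => k l m n.
  rewrite rhoE !mxDE !mxZE SumPM SumD SumO eN /ms.
  cases4 k l m n.
apply: sepD; [apply: sepD|].
- apply: sepZ; [by apply: divr_ge0; lra | ].
  apply: sep_sum => i _; apply: sep_sum => j _; exact: sep_Phi.
- apply: sepZ; [by apply: divr_ge0; lra | apply: sep_sum => i _; exact: sep_Phi].
- apply: sepZ; [by apply: divr_ge0; lra | ].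
  apply: sep_sum => i _; apply: sep_sum => j _; exact: sep_Phi.
Qed.
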